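(* For every $n\ge0$ there exists a bijection between the set of relaxed binary trees of size $n$ and the set $\mathcal{D}_n$ of horizontally decorated Dyck paths of length $2n$.
   Context: A (rooted, plane) binary tree is either a leaf or an internal node with an ordered pair of binary subtrees; its size is its number of internal nodes; postorder visits left subtree, right subtree, then root. A relaxed binary tree of size $n$ is obtained from a binary tree $T$ with $n$ internal nodes (its spine) by keeping the left-most leaf and turning every other leaf $\ell$ into a pointer to a vertex of $T$ which is an internal node or the left-most leaf and which precedes $\ell$ in postorder; two relaxed trees are equal iff they have the same spine and the same pointer targets. A horizontally decorated path is a lattice path starting at $(0,0)$ with steps $H=(1,0)$ and $V=(0,1)$ confined to the region $0\le y\le x$, in which each $H$ step is decorated by a number in $\{1,\dots,k+1\}$, where $k$ is the $y$-coordinate of that step. It is a horizontally decorated Dyck path (of length $2n$) if it ends at $(n,n)$; $\mathcal{D}_n$ denotes the set of these. *)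

(* Defs.v *)
From mathcomp Require Import all_boot.
Set Implicit Arguments. Unset Strict Implicit. Unset Printing Implicit Defensive.

Inductive btree : Type := Leaf | Node of btree & btree.

Fixpoint bsize (t : btree) : nat :=
  match t with Leaf => 0 | Node l r => (bsize l + bsize r).+1 end.

(* Vertices are addressed by their path from the root (false = left child,
   true = right child). *)
Definition pos := seq bool.

Fixpoint postorder (t : btree) : seq pos :=
  match t with
  | Leaf => [:: [::]]
  | Node l r => map (cons false) (postorder l) ++ map (cons true) (postorder r) ++ [:: [::]]
  end.

Fixpoint leaves (t : btree) : seq pos :=
  match t with
  | Leaf => [:: [::]]
  | Node l r => map (cons false) (leaves l) ++ map (cons true) (leaves r)
  end.

Fixpoint internals (t : btree) : seq pos :=
  match t with
  | Leaf => [::]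
  | Node l r => map (cons false) (internals l) ++ map (cons true) (internals r) ++ [:: [::]]
  end.

Definition leftmost_leaf (t : btree) : pos := head [::] (leaves t).

Definition admissible_target (t : btree) (l v : pos) : bool :=
  [&& v \in postorder t,
      (v \in internals t) || (v == leftmost_leaf t)
    & index v (postorder t) < index l (postorder t)].

(* A relaxed binary tree: its spine, and the list of pointer targets of the
   non-left-most leaves (listed in postorder of the leaves). *)
Record relaxed := Relaxed { spine : btree; targets : seq pos }.

Definition is_relaxed (n : nat) (r : relaxed) : bool :=
  (bsize (spine r) == n) &&
  all2 (admissible_target (spine r)) (behead (leaves (spine r))) (targets r).

Definition RelaxedTree (n : nat) := {r : relaxed | is_relaxed n r}.

(* Horizontally decorated paths: H d is a horizontal step decorated by d. *)
Inductive step : Type := H of nat | V.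

Fixpoint hd_ok (n x y : nat) (s : seq step) : bool :=
  match s with
  | [::] => (x == n) && (y == n)
  | H d :: s' => (0 < d <= y.+1) && hd_ok n x.+1 y s'
  | V :: s' => (y.+1 <= x) && hd_ok n x y.+1 s'
  end.

Definition is_hdDyck (n : nat) (s : seq step) : bool := hd_ok n 0 0 s.

Definition HDDyck (n : nat) := {s : seq step | is_hdDyck n s}.

(* Main.v *)
Require Import Defs.
From mathcomp Require Import all_boot zify.
Set Implicit Arguments. Unset Strict Implicit. Unset Printing Implicit Defensive.

Fixpoint tw (t : btree) : seq bool :=
  match t with Leaf => [:: true] | Node l r => tw l ++ tw r ++ [:: false] end.

Fixpoint lp (t : btree) : seq (pos * bool) :=
  match t with
  | Leaf => [:: ([::], true)]
  | Node l r => [seq (false :: x.1, x.2) | x <- lp l] ++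
                [seq (true :: x.1, x.2) | x <- lp r] ++ [:: ([::], false)]
  end.

Lemma lp_fst t : map fst (lp t) = postorder t.
Proof. elim: t => //= l IHl r IHr; rewrite !map_cat -IHl -IHr -!map_comp //. Qed.

Lemma lp_snd t : map snd (lp t) = tw t.
Proof. elim: t => //= l IHl r IHr; rewrite !map_cat -IHl -IHr -!map_comp //. Qed.

Lemma lp_leaves t : leaves t = map fst (filter snd (lp t)).
Proof.
elim: t => //= l IHl r IHr; rewrite !filter_cat !filter_map /= cats0 !map_cat IHl IHr -!map_comp //.
Qed.

Lemma lp_internals t : internals t = map fst (filter (fun x => ~~ x.2) (lp t)).
Proof.
elim: t => //= l IHl r IHr; rewrite !filter_cat !filter_map /= !map_cat IHl IHr -!map_comp //.
Qed.

Lemma lp_head t : exists v rest, lp t = (v, true) :: rest.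
Proof.
elim: t => [|l [v [rest Hl]] r _] /=; first by exists [::], [::].
rewrite Hl /=; by exists (false :: v), ([seq (false :: x.1, x.2) | x <- rest] ++
                [seq (true :: x.1, x.2) | x <- lp r] ++ [:: ([::], false)]).
Qed.

Lemma uniq_post t : uniq (postorder t).
Proof.
elim: t => //= l IHl r IHr.
rewrite cat_uniq cat_uniq !map_inj_uniq ?IHl ?IHr /=; last 2 first.
- by move=> x y [].
- by move=> x y [].
rewrite andbT orbF; apply/andP; split.
  apply/hasPn=> v; rewrite mem_cat mem_seq1 => /orP[/mapP[u _ ->]|/eqP->];
  by apply/negP=> /mapP[u' _].
apply/negP=> /mapP[u _] //.
Qed.

Lemma count_tw t : count id (tw t) = (bsize t).+1.
Proof. elim: t => //= l IHl r IHr; rewrite !count_cat IHl IHr /=; lia. Qed.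

Lemma size_leaves t : size (leaves t) = (bsize t).+1.
Proof. elim: t => //= l IHl r IHr; rewrite size_cat !size_map IHl IHr; lia. Qed.

Lemma tw_head t : exists w, tw t = true :: w.
Proof. elim: t => [|l [w Hl] r _] /=; [|rewrite Hl]; by eexists. Qed.

Fixpoint lukaF (n x y : nat) (w : seq bool) : bool :=
  match w with
  | [::] => (x == n.+1) && (y == n)
  | true :: w' => lukaF n x.+1 y w'
  | false :: w' => (y.+2 <= x) && lukaF n x y.+1 w'
  end.

Lemma lukaF_cat n x y t w : y <= x ->
  lukaF n x y (tw t ++ w) = lukaF n (x + (bsize t).+1) (y + bsize t) w.
Proof.
elim: t x y w => [|l IHl r IHr] x y w Hxy /=; first by rewrite addn1 addn0.
rewrite -!catA IHl // IHr; last lia.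
rewrite /=. have -> : (y + bsize l + bsize r).+1 < x + (bsize l).+1 + (bsize r).+1 by lia.
by congr lukaF; lia.
Qed.

Fixpoint parse (st : seq btree) (w : seq bool) : seq btree :=
  match w with
  | [::] => st
  | true :: w' => parse (Leaf :: st) w'
  | false :: w' => match st with r :: l :: st' => parse (Node l r :: st') w' | _ => [::] end
  end.

Lemma parse_cat st t w : parse st (tw t ++ w) = parse (t :: st) w.
Proof.
elim: t st w => [|l IHl r IHr] st w //=.
by rewrite -!catA IHl IHr.
Qed.

Fixpoint twr (st : seq btree) : seq bool :=
  match st with [::] => [::] | t :: st' => twr st' ++ tw t end.

Lemma parse_ok n w : forall st x y, lukaF n x y w -> size st + y = x ->
  twr (parse st w) = twr st ++ w /\ size (parse st w) = 1.
Proof.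
elim: w => [|[] w IH] st x y /=.
- move=> /andP[/eqP -> /eqP ->] Hs; split; first by rewrite cats0.
  lia.
- move=> H Hs.
  have Hs' : size (Leaf :: st) + y = x.+1 by rewrite /=; lia.
  have [-> ->] := IH _ _ _ H Hs'.
  by rewrite /= -catA.
- move=> /andP[Hxy H] Hs.
  case: st Hs => [|r [|l st]] /= Hs; try lia.
  have Hs' : size (Node l r :: st) + y.+1 = x by rewrite /=; lia.
  have [-> ->] := IH _ _ _ H Hs'.
  by rewrite /= -!catA.
Qed.

Definition isH (s : step) : bool := if s is H _ then true else false.

Fixpoint decs (s : seq step) : seq nat :=
  match s with [::] => [::] | H d :: s' => d :: decs s' | V :: s' => decs s' end.

Fixpoint mkpath (w : seq bool) (ds : seq nat) : seq step :=
  match w with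
  | [::] => [::]
  | true :: w' => H (head 0 ds) :: mkpath w' (behead ds)
  | false :: w' => V :: mkpath w' ds
  end.

Fixpoint caps (c : nat) (w : seq bool) : seq nat :=
  match w with
  | [::] => [::]
  | true :: w' => c :: caps c w'
  | false :: w' => caps c.+1 w'
  end.

Lemma mkpath_decs s : mkpath (map isH s) (decs s) = s.
Proof. by elim: s => [|[d|] s IH] //=; rewrite IH. Qed.

Lemma isH_mkpath w ds : map isH (mkpath w ds) = w.
Proof. by elim: w ds => [|[] w IH] ds //=; rewrite IH. Qed.

Lemma size_decs s : size (decs s) = count id (map isH s).
Proof. by elim: s => [|[d|] s IH] //=; rewrite IH. Qed.

Lemma decs_mkpath w ds : size ds = count id w -> decs (mkpath w ds) = ds.
Proof.
elim: w ds => [|[] w IH] [|d ds] //= Hs; rewrite IH //.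
by case: Hs.
Qed.

Lemma hd_mk n w : forall x y ds, size ds = count id w ->
  hd_ok n x y (mkpath w ds) =
  lukaF n x.+1 y w && all2 (fun d c => 0 < d <= c) ds (caps y.+1 w).
Proof.
elim: w => [|[] w IH] x y ds /=.
- by case: ds => //= _; rewrite eqSS andbT.
- case: ds => [|d ds] //= [Hs]; by rewrite IH // andbCA.
- move=> Hs; by rewrite IH // andbA.
Qed.

Lemma all2_size (T1 T2 : Type) (P : T1 -> T2 -> bool) s1 s2 :
  all2 P s1 s2 -> size s1 = size s2.
Proof. by elim: s1 s2 => [|a s1 IH] [|b s2] //= /andP[_ /IH ->]. Qed.

Section Gen.
Variable A : pos -> seq pos.

Lemma enc_ok L ts : all2 (fun l v => v \in A l) L ts ->
  all2 (fun d c => 0 < d <= c) (map (fun p => (index p.2 (A p.1)).+1) (zip L ts))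
       (map (fun l => size (A l)) L).
Proof.
elim: L ts => [|l L IH] [|v ts] //= /andP[Hv H]; by rewrite index_mem Hv IH.
Qed.

Lemma dec_ok L ds : all2 (fun d c => 0 < d <= c) ds (map (fun l => size (A l)) L) ->
  all2 (fun l v => v \in A l) L (map (fun p => nth [::] (A p.1) p.2.-1) (zip L ds)).
Proof.
elim: L ds => [|l L IH] [|d ds] //= /andP[/andP[H0 H1] H]; rewrite IH // andbT.
by apply: mem_nth; rewrite prednK.
Qed.

Lemma enc_dec L ds : (forall l, uniq (A l)) ->
  all2 (fun d c => 0 < d <= c) ds (map (fun l => size (A l)) L) ->
  map (fun p => (index p.2 (A p.1)).+1)
      (zip L (map (fun p => nth [::] (A p.1) p.2.-1) (zip L ds))) = ds.
Proof.
move=> U; elim: L ds => [|l L IH] [|d ds] //= /andP[/andP[H0 H1] H].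
rewrite IH // index_uniq //; last by rewrite prednK.
by rewrite prednK.
Qed.

Lemma dec_enc L ts : all2 (fun l v => v \in A l) L ts ->
  map (fun p => nth [::] (A p.1) p.2.-1)
      (zip L (map (fun p => (index p.2 (A p.1)).+1) (zip L ts))) = ts.
Proof.
elim: L ts => [|l L IH] [|v ts] //= /andP[Hv H]; by rewrite IH // nth_index.
Qed.
End Gen.

Lemma filter_idx (T : eqType) (a b : seq T) (Q : pred T) : uniq (a ++ b) ->
  [seq v <- a ++ b | Q v && (index v (a ++ b) < size a)] = [seq v <- a | Q v].
Proof.
rewrite cat_uniq => /and3P[_ Hn _].
rewrite filter_cat.
have -> : [seq v <- b | Q v && (index v (a ++ b) < size a)] = [::].
  rewrite (eq_in_filter (a2 := pred0)) ?filter_pred0 // => v Hv.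
  have Hva : (v \in a) = false.
    by apply/negP=> Ha; move/hasPn: Hn => /(_ v Hv); rewrite Ha.
  by rewrite index_cat Hva /= ltnNge leq_addr andbF.
rewrite cats0; apply: eq_in_filter => v Hv.
by rewrite index_cat Hv index_mem Hv andbT.
Qed.

Lemma uniq_map_fst_eq (T1 T2 : eqType) (s : seq (T1 * T2)) x y :
  uniq (map fst s) -> x \in s -> y \in s -> x.1 = y.1 -> x = y.
Proof.
elim: s => [|a s IH] //= /andP[Ha U]; rewrite !inE => /orP[/eqP->|Hx] /orP[/eqP->|Hy] //.
- move=> E; case/negP: Ha; rewrite E; exact: map_f.
- move=> E; case/negP: Ha; rewrite -E; exact: map_f.
- exact: IH.
Qed.

Lemma capsG (lp : seq (pos * bool)) (Q : pred pos) suf : forall pre,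
  lp = pre ++ suf -> uniq (map fst lp) -> (forall x, x \in suf -> Q x.1 = ~~ x.2) ->
  map (fun l => count Q (take (index l (map fst lp)) (map fst lp))) (map fst (filter snd suf))
  = caps (count Q (map fst pre)) (map snd suf).
Proof.
elim: suf => [|[v b] suf IH] pre E U HQ //.
have Hv : index v (map fst lp) = size pre.
  rewrite E map_cat index_cat.
  have -> : (v \in map fst pre) = false.
    apply/negP => Hin; move: U; rewrite E map_cat cat_uniq => /and3P [_ Hn _].
    by move/hasPn: Hn => /(_ v); rewrite /= inE eqxx => /(_ isT); rewrite Hin.
  by rewrite /= eqxx addn0 size_map.
have E' : lp = rcons pre (v,b) ++ suf by rewrite E cat_rcons.
have HQ' : forall x, x \in suf -> Q x.1 = ~~ x.2.
  by move=> x Hx; apply: HQ; rewrite inE Hx orbT.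
have Hc : count Q (map fst (rcons pre (v,b))) = count Q (map fst pre) + ~~ b.
  rewrite map_rcons -cats1 count_cat /= (HQ (v,b)) ?mem_head //= addn0 //.
have IH' := IH _ E' U HQ'.
have Ht : take (size pre) (map fst lp) = map fst pre.
  by rewrite E map_cat take_size_cat ?size_map.
clear E; case: b HQ Hc E' IH' => HQ Hc E' IH' /=.
- rewrite IH' Hc addn0 Hv Ht //.
- by rewrite IH' Hc addn1.
Qed.

Definition Qt (t : btree) (u : pos) : bool :=
  (u \in internals t) || (u == leftmost_leaf t).

Definition allowed (t : btree) (l : pos) : seq pos :=
  [seq v <- postorder t | admissible_target t l v].

Lemma allowed_mem t l v : (v \in allowed t l) = admissible_target t l v.
Proof.
rewrite mem_filter; apply/andP/idP => [[]//|H]; split => //.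
by case/and3P: H.
Qed.

Lemma uniq_allowed t l : uniq (allowed t l).
Proof. exact: filter_uniq (uniq_post t). Qed.

Lemma all2_adm t L ts :
  all2 (admissible_target t) L ts = all2 (fun l v => v \in allowed t l) L ts.
Proof. by elim: L ts => [|l L IH] [|v ts] //=; rewrite IH allowed_mem. Qed.

Lemma size_allowed t l :
  size (allowed t l) = count (Qt t) (take (index l (postorder t)) (postorder t)).
Proof.
set p := postorder t; set m := index l p.
rewrite /allowed -size_filter.
have -> : [seq v <- p | admissible_target t l v] = [seq v <- p | Qt t v && (index v p < m)].
  by apply: eq_in_filter => v Hv; rewrite /admissible_target Hv.
have U : uniq (take m p ++ drop m p) by rewrite cat_take_drop uniq_post.
have := filter_idx (Qt t) U.
rewrite cat_take_drop size_takel ?index_size; first by move=> ->.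
by [].
Qed.

Lemma capsT t :
  map (fun l => size (allowed t l)) (behead (leaves t)) = caps 1 (behead (tw t)).
Proof.
have [v [rest E]] := lp_head t.
have Hlm : leftmost_leaf t = v by rewrite /leftmost_leaf lp_leaves E.
have U : uniq (map fst (lp t)) by rewrite lp_fst uniq_post.
have HQ : forall x, x \in rest -> Qt t x.1 = ~~ x.2.
  move=> [u b] Hx /=; rewrite /Qt Hlm.
  have Hne : (u == v) = false.
    apply/negbTE/eqP => Huv; move: U; rewrite E /= => /andP[Hn _].
    by case/negP: Hn; rewrite -Huv; apply/mapP; exists (u,b).
  rewrite Hne orbF lp_internals.
  have Hin : (u, b) \in lp t by rewrite E inE Hx orbT.
  case: b Hx Hin => Hx Hin /=.
  - apply/negP => /mapP [[u' b']]; rewrite mem_filter /= => /andP [Hb' Hin'] Hu.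
    have := uniq_map_fst_eq U Hin Hin' Hu.
    by case=> _ Hbb; rewrite -Hbb in Hb'.
  - by apply/mapP; exists (u,false) => //; rewrite mem_filter.
have Hc := capsG (pre := [:: (v,true)]) E U HQ.
have HQv : count (Qt t) (map fst [:: (v, true)]) = 1.
  by rewrite /= /Qt Hlm eqxx orbT.
rewrite HQv in Hc.
rewrite lp_leaves -lp_snd E /= -Hc.
apply: eq_map => l; rewrite lp_fst; exact: size_allowed.
Qed.

Lemma tw_behead t : tw t = true :: behead (tw t).
Proof. by have [w ->] := tw_head t. Qed.

Lemma count_behead t : count id (behead (tw t)) = bsize t.
Proof. by have := count_tw t; rewrite {1}tw_behead /= add1n => [[]]. Qed.

Lemma size_bleaves t : size (behead (leaves t)) = bsize t.
Proof. by rewrite size_behead size_leaves. Qed.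

Definition enc (t : btree) (ts : seq pos) : seq nat :=
  map (fun p => (index p.2 (allowed t p.1)).+1) (zip (behead (leaves t)) ts).

Definition F (r : relaxed) : seq step :=
  mkpath (behead (tw (spine r))) (enc (spine r) (targets r)).

Definition treeOf (s : seq step) : btree := head Leaf (parse [::] (true :: map isH s)).

Definition G (s : seq step) : relaxed :=
  let t := treeOf s in
  Relaxed t (map (fun p => nth [::] (allowed t p.1) p.2.-1) (zip (behead (leaves t)) (decs s))).

Lemma size_enc t ts : all2 (admissible_target t) (behead (leaves t)) ts ->
  size (enc t ts) = count id (behead (tw t)).
Proof.
move=> /all2_size Hs; rewrite size_map size_zip -Hs minnn size_bleaves count_behead //.
Qed.

Lemma FP n r : is_relaxed n r -> is_hdDyck n (F r).
Proof.
case: r => t ts; rewrite /is_relaxed /= => /andP [/eqP Hn Hall].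
rewrite /is_hdDyck /F /= hd_mk ?size_enc //.
apply/andP; split.
  have := @lukaF_cat n 0 0 t [::] (leqnn 0).
  rewrite cats0 {1}tw_behead /= add0n Hn => ->; by rewrite !eqxx.
rewrite -capsT; apply: enc_ok; by rewrite -all2_adm.
Qed.

Lemma treeOf_tw n s : is_hdDyck n s ->
  tw (treeOf s) = true :: map isH s /\ bsize (treeOf s) = n.
Proof.
rewrite /is_hdDyck -{1}(mkpath_decs s) hd_mk ?size_decs // => /andP[HL _].
have HL' : lukaF n 0 0 (true :: map isH s) by [].
have [] := parse_ok (st := [::]) HL' (erefl _).
rewrite /treeOf; case: (parse [::] (true :: map isH s)) => [|t [|]] //= Ht _.
split => //.
have := @lukaF_cat n 0 0 t [::] (leqnn 0).
by rewrite cats0 Ht HL' add0n => /esym /andP[_ /eqP].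
Qed.

Lemma GP n s : is_hdDyck n s -> is_relaxed n (G s).
Proof.
move=> Hs; have [Ht Hn] := treeOf_tw Hs.
move: Hs; rewrite /is_hdDyck -{1}(mkpath_decs s) hd_mk ?size_decs // => /andP[_ Hb].
rewrite /is_relaxed /G /= Hn eqxx /= all2_adm.
apply: dec_ok; rewrite capsT Ht //.
Qed.

Lemma GF n r : is_relaxed n r -> G (F r) = r.
Proof.
case: r => t ts; rewrite /is_relaxed /= => /andP [/eqP Hn Hall].
have Ht : treeOf (F (Relaxed t ts)) = t.
  have H0 : head Leaf (parse [::] (true :: behead (tw t))) = t.
    by rewrite -tw_behead -(cats0 (tw t)) parse_cat.
  rewrite /treeOf /F /= isH_mkpath; exact: H0.
rewrite /G Ht /F /= decs_mkpath ?size_enc // dec_enc //.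
by rewrite -all2_adm.
Qed.

Lemma FG n s : is_hdDyck n s -> F (G s) = s.
Proof.
move=> Hs; have [Ht Hn] := treeOf_tw Hs.
move: Hs; rewrite /is_hdDyck -{1}(mkpath_decs s) hd_mk ?size_decs // => /andP[_ Hb].
rewrite /F /G /= Ht /= /enc enc_dec ?mkpath_decs //.
  exact: uniq_allowed.
by rewrite capsT Ht.
Qed.

Theorem theorem2p5 (n : nat) :
  exists f : RelaxedTree n -> HDDyck n, bijective f.
Proof.
exists (fun r : RelaxedTree n => exist _ (F (val r)) (FP (valP r))).
exists (fun s : HDDyck n => exist _ (G (val s)) (GP (valP s))).
- by move=> [r Hr]; apply: val_inj => /=; exact: (GF Hr).
- by move=> [s Hs]; apply: val_inj => /=; exact: (FG Hs).
Qed.
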